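(* Let $G$ be a pseudoforest, let $\tau=\tau_A$ with $A=\binom{a\ b}{c\ d}$ be a 2-switch on $G$, and let $U$ and $U'$ be different unicyclic components of $G$ such that $ab\in E(\operatorname{Forest}(U))$ and $cd\in E(\operatorname{Forest}(U'))$. Then $\tau$ is a p-switch over $G$ if and only if $\tau'=\tau_{A'}$ with $A'=\binom{a\ b}{d\ c}$ is not a p-switch over $G$.
   Context: Graphs are finite, simple, undirected, labeled. A unicyclic graph is a connected graph with exactly one cycle; a pseudoforest is a graph each of whose components is a tree or a unicyclic graph. For vertices $a,b,c,d$, $A=\binom{a\ b}{c\ d}$ is interchangeable in $G$ if $ab,cd\in E(G)$, $\{a,b\}\cap\{c,d\}=\varnothing$, $ac,bd\notin E(G)$; the 2-switch $\tau_A$ sends $G$ to $G-ab-cd+ac+bd$ if $A$ is interchangeable and to $G$ otherwise (trivial). A nontrivial 2-switch $\tau$ over a pseudoforest $G$ is a p-switch if $\tau(G)$ is a pseudoforest. $\operatorname{Cycles}(H)$ is the subgraph induced by vertices lying on some cycle of $H$; $\operatorname{Forest}(H)=H-E(\operatorname{Cycles}(H))$. *)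

(* Defs.v *)
(* Finite simple undirected labeled graphs on a finType T,
   represented by a symmetric irreflexive relation g : rel T. *)
From mathcomp Require Import all_boot.
Set Implicit Arguments. Unset Strict Implicit. Unset Printing Implicit Defensive.

Section Graphs.
Variable T : finType.

Definition simple_graph (g : rel T) : Prop := symmetric g /\ irreflexive g.

Definition induced (g : rel T) (S : {set T}) : rel T :=
  fun x y => [&& x \in S, y \in S & g x y].

Definition is_gcycle (g : rel T) (c : seq T) : Prop :=
  [/\ cycle g c, uniq c & 2 < size c].

Definition cycle_edges (c : seq T) : {set T * T} :=
  [set p | [exists x in c, (p == (x, next c x)) || (p == (next c x, x))]].

(* the cycle subgraphs of g are identified by their edge sets *)
Definition unique_cycle (g : rel T) : Prop :=
  exists c, is_gcycle g c /\
    forall c', is_gcycle g c' -> cycle_edges c' = cycle_edges c.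

Definition acyclic (g : rel T) : Prop := forall c, ~ is_gcycle g c.

Definition connected_on (g : rel T) (S : {set T}) : Prop :=
  {in S &, forall x y, connect (induced g S) x y}.

Definition component (g : rel T) (S : {set T}) : Prop :=
  exists x, S = [set y | connect g x y].

Definition tree_on (g : rel T) (S : {set T}) : Prop :=
  connected_on g S /\ acyclic (induced g S).

Definition unicyclic_on (g : rel T) (S : {set T}) : Prop :=
  connected_on g S /\ unique_cycle (induced g S).

Definition pseudoforest (g : rel T) : Prop :=
  simple_graph g /\
  forall S, component g S -> tree_on g S \/ unicyclic_on g S.

Definition on_cycle (h : rel T) (v : T) : Prop :=
  exists c, is_gcycle h c /\ v \in c.

(* xy is an edge of Forest(H), H the induced subgraph on U:
   an edge of H not in E(Cycles(H)), where Cycles(H) is induced by the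
   vertices on cycles of H *)
Definition forest_edge (g : rel T) (U : {set T}) (x y : T) : Prop :=
  induced g U x y /\ ~ (on_cycle (induced g U) x /\ on_cycle (induced g U) y).

Definition interchangeable (g : rel T) (a b c d : T) : bool :=
  [&& g a b, g c d, a != c, a != d, b != c, b != d, ~~ g a c & ~~ g b d].

Definition same_pair (x y u v : T) : bool :=
  ((x == u) && (y == v)) || ((x == v) && (y == u)).

Definition two_switch (g : rel T) (a b c d : T) : rel T :=
  if interchangeable g a b c d then
    fun x y => (g x y && ~~ same_pair x y a b && ~~ same_pair x y c d)
               || same_pair x y a c || same_pair x y b d
  else g.

Definition p_switch (g : rel T) (a b c d : T) : Prop :=
  interchangeable g a b c d /\ pseudoforest (two_switch g a b c d).

End Graphs.

(* Main.v *)
Require Import Defs.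
From mathcomp Require Import all_boot.
From Stdlib Require Import Classical.
Set Implicit Arguments. Unset Strict Implicit. Unset Printing Implicit Defensive.

Section Generic.
Variable T : finType.
Implicit Types (h e : rel T) (s : seq T) (x y u v z : T).

Lemma same_pairC x y u v : same_pair x y u v = same_pair x y v u.
Proof.
by rewrite /same_pair; case: (x == u); case: (y == v); case: (x == v); case: (y == u).
Qed.

Lemma same_pairS x y u v : same_pair x y u v = same_pair y x u v.
Proof.
by rewrite /same_pair; case: (x == u); case: (y == v); case: (x == v); case: (y == u).
Qed.

Lemma same_pair_refl x y : same_pair x y x y.
Proof. by rewrite /same_pair !eqxx. Qed.

Lemma cycle_conn e s x y : cycle e s -> x \in s -> y \in s -> connect e x y.
Proof.
move=> cs xs ys; case/rot_to: xs => i s' Hr.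
have : cycle e (x :: s') by rewrite -Hr rot_cycle.
rewrite /= rcons_path => /andP[p _].
have : y \in x :: s' by rewrite -Hr mem_rot.
by apply: (path_connect p).
Qed.

Lemma path_pres e (A : Type) (f : T -> A) :
  (forall u v, e u v -> f u = f v) -> forall p z, path e z p -> f z = f (last z p).
Proof.
move=> H; elim=> [|w p IH] z //= /andP[ezw pp].
by rewrite (H _ _ ezw); apply: IH.
Qed.

Lemma conn_pres e (A : Type) (f : T -> A) :
  (forall u v, e u v -> f u = f v) -> forall x y, connect e x y -> f x = f y.
Proof.
move=> H x _ /connectP[p pp ->]; exact: path_pres H p x pp.
Qed.

Lemma path_nb x y : forall t z, uniq (z :: rcons t x) -> y \notin rcons t x ->
  (z = y -> t != [::]) -> path (fun u v => ~~ same_pair u v x y) z (rcons t x).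
Proof.
elim=> [|w t IH] z /=.
  rewrite andbT => zx _ H; rewrite andbT.
  apply/negP => /orP[/andP[/eqP zx' _]|/andP[/eqP zy _]].
    by move: zx; rewrite zx' inE eqxx.
  by move: (H zy).
move=> /and3P[zn wn ut] yn _; apply/andP; split.
  apply/negP => /orP[/andP[/eqP zx _]|/andP[_ /eqP wx]].
    by move: zn; rewrite zx inE mem_rcons mem_head orbT.
  by move: wn; rewrite wx mem_rcons mem_head.
apply: IH => //.
  by rewrite /= wn.
  by move: yn; rewrite inE negb_or => /andP[].
move=> wy; move: yn; by rewrite wy inE eqxx.
Qed.

Lemma cut_cycle h (P : pred T) s x y : is_gcycle h s -> x \in s -> next s x = y ->
  (forall u v, h u v -> ~~ same_pair u v x y -> P u = P v) -> P x = P y.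
Proof.
case=> cs us ss xs nx HP.
have ys : y \in s by rewrite -nx mem_next.
case/rot_to: ys => i s' Hr.
have us' : uniq (y :: s') by rewrite -Hr rot_uniq.
have cs' : cycle h (y :: s') by rewrite -Hr rot_cycle.
have sz : size s = (size s').+1 by rewrite -(size_rot i s) Hr.
have nx' : next (y :: s') x = y by rewrite -Hr next_rot.
have xs' : x \in y :: s' by rewrite -Hr mem_rot.
clear Hr; case/lastP: s' us' cs' sz nx' xs' => [|t w] us' cs' sz nx' xs'.
  by rewrite sz in ss.
have wx : w = x.
  have := cycle_next us'; rewrite /= rcons_path last_rcons => /andP[_ /eqP nw].
  by rewrite -(prev_next us' w) -(prev_next us' x) nw nx'.
subst w.
move: cs'; rewrite /= rcons_path => /andP[ph _].
have pnb := @path_nb x y t y us'.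
have : path (fun u v => h u v && ~~ same_pair u v x y) y (rcons t x).
  rewrite (@path_relI _ h (fun u v => ~~ same_pair u v x y)) ph /=.
  apply: pnb; first by move: us' => /= /andP[].
  by move=> _; apply/eqP => t0; move: ss; rewrite sz t0.
move/(path_pres (f := P)); rewrite last_rcons => ->//.
by move=> u v /andP[]; apply: HP.
Qed.

Lemma cut_cycle2 h (P : pred T) s x p q : is_gcycle h s -> x \in s ->
  same_pair x (next s x) p q ->
  (forall u v, h u v -> ~~ same_pair u v p q -> P u = P v) -> P p = P q.
Proof.
move=> gs xs /orP[/andP[/eqP xp /eqP nq]|/andP[/eqP xq /eqP np]] HP.
  by subst x; apply: (cut_cycle gs xs nq).
subst x; symmetry; apply: (cut_cycle gs xs np) => u v huv.
by rewrite same_pairC; apply: HP.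
Qed.

Lemma comp_mem h S x y : symmetric h -> component h S -> x \in S ->
  (y \in S) = connect h x y.
Proof.
move=> symh [x0 ->]; rewrite !inE => cx.
by rewrite (same_connect (sym_connect_sym symh) cx).
Qed.

Lemma conn_induced h S x y : symmetric h -> component h S -> x \in S ->
  connect h x y -> connect (induced h S) x y.
Proof.
move=> symh cS xS /connectP[p pp ->].
have allS : all (mem S) (x :: p).
  apply/allP => z zp /=.
  by rewrite (comp_mem z symh cS xS); apply: (path_connect pp).
apply/connectP; exists p => //.
apply: (sub_in_path (P := mem S) _ allS pp).
by move=> u v uS vS huv; rewrite /induced uS vS huv.
Qed.

Lemma cycle_in_comp h S s x : symmetric h -> component h S -> is_gcycle h s ->
  x \in s -> x \in S -> {subset s <= S} /\ is_gcycle (induced h S) s.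
Proof.
move=> symh cS [cs us ss] xs xS.
have sub : {subset s <= S}.
  by move=> z zs; rewrite (comp_mem z symh cS xS); apply: cycle_conn cs xs zs.
split=> //; split=> //.
apply: (sub_in_cycle (P := mem S) _ _ cs).
  by move=> u v uS vS huv; rewrite /induced uS vS huv.
by apply/allP.
Qed.

Lemma induced_cycle h S s : is_gcycle (induced h S) s ->
  is_gcycle h s /\ {subset s <= S}.
Proof.
case=> cs us ss; split.
  split=> //; apply: (sub_cycle _ cs) => u v /and3P[] //.
by move=> z zs; have /and3P[] := next_cycle cs zs.
Qed.

Lemma edges_mem s1 s2 x : cycle_edges s1 = cycle_edges s2 -> x \in s1 -> x \in s2.
Proof.
move=> E xs.
have : (x, next s1 x) \in cycle_edges s1.
  by rewrite inE; apply/existsP; exists x; rewrite xs eqxx.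
rewrite E inE => /existsP[y /andP[ys /orP[/eqP[-> _]|/eqP[-> _]]]] //.
by rewrite mem_next.
Qed.

Lemma gcycle_head h s : is_gcycle h s -> exists v, v \in s.
Proof. by case: s => [[_ _]|v s _] //; exists v; apply: mem_head. Qed.

Lemma pf_dir h s1 s2 u v : pseudoforest h -> is_gcycle h s1 -> is_gcycle h s2 ->
  u \in s1 -> v \in s2 -> connect h u v -> cycle_edges s1 = cycle_edges s2.
Proof.
case=> [[symh irrh] Hc] c1 c2 us vs cuv.
pose S := [set y | connect h u y].
have compS : component h S by exists u.
have uS : u \in S by rewrite inE connect0.
have vS : v \in S by rewrite inE.
have [_ i1] := cycle_in_comp symh compS c1 us uS.
have [_ i2] := cycle_in_comp symh compS c2 vs vS.
case: (Hc S compS) => [[_ ac]|[_ [c0 [_ uc]]]].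
  by case: (ac s1 i1).
by rewrite (uc _ i1) (uc _ i2).
Qed.

Lemma pf_conv h : simple_graph h ->
  (forall s1 s2 u v, is_gcycle h s1 -> is_gcycle h s2 -> u \in s1 -> v \in s2 ->
     connect h u v -> cycle_edges s1 = cycle_edges s2) -> pseudoforest h.
Proof.
move=> [symh irrh] H; split=> // S compS.
have cS : connected_on h S.
  move=> y z yS zS; apply: (conn_induced symh compS yS).
  by rewrite -(comp_mem z symh compS yS).
case: (classic (exists c, is_gcycle (induced h S) c)) => [[c0 i0]|nc].
  right; split=> //; exists c0; split=> // c' i'.
  have [g0 s0] := induced_cycle i0; have [g' s'] := induced_cycle i'.
  have [u uc0] := gcycle_head i0; have [v vc'] := gcycle_head i'.
  apply: (H c' c0 v u g' g0 vc' uc0).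
  by rewrite -(comp_mem u symh compS (s' v vc')); apply: s0.
by left; split=> // c ic; apply: nc; exists c.
Qed.

Lemma bridge h S x y (e : rel T) : simple_graph h -> component h S ->
  forest_edge h S x y -> subrel e h ->
  (forall u v, e u v -> ~~ same_pair u v x y) -> ~~ connect e x y.
Proof.
move=> [symh irrh] cS [/and3P[xS yS hxy] nc] seh nse.
apply/negP => /connectP[p pe lp].
move: lp; case/shortenP: pe => p' pe' up' _ lp.
case: p' pe' up' lp => [|z [|z2 q]] pe' up' /= lp.
- by move: hxy; rewrite lp /= irrh.
- by move: pe' => /= /andP[/nse]; rewrite -lp same_pair_refl.
have gs : is_gcycle h [:: x, z, z2 & q].
  have pe2 := sub_path seh pe'.
  split=> //; rewrite /cycle rcons_path pe2 /= -lp symh hxy.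
  by [].
have xs : x \in [:: x, z, z2 & q] by apply: mem_head.
have ys : y \in [:: x, z, z2 & q] by rewrite lp (in_cons x) (in_cons z) mem_last !orbT.
have [_ ic] := cycle_in_comp symh cS gs xs xS.
by apply: nc; split; exists [:: x, z, z2 & q].
Qed.

Lemma cover_split h S x y e : symmetric h -> component h S -> x \in S ->
  (forall u v, h u v -> u \in S -> e u v || same_pair u v x y) ->
  forall z, z \in S -> connect e x z || connect e y z.
Proof.
move=> symh cS xS H z.
rewrite (comp_mem z symh cS xS) => /connectP[p pp ->].
suff K : forall p w, w \in S -> connect e x w || connect e y w -> path h w p ->
   connect e x (last w p) || connect e y (last w p).
  by apply: K => //; rewrite connect0.
elim=> [|v q IH] w wS cw //= /andP[hwv pq].
apply: IH pq.
  by rewrite (comp_mem v symh cS wS) connect1.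
case/orP: (H _ _ hwv wS) => [ewv|].
  by case/orP: cw => cc; apply/orP; [left|right]; apply: connect_trans cc (connect1 ewv).
by case/orP => /andP[_ /eqP ->]; rewrite connect0 ?orbT.
Qed.

Lemma no_sp h S p q s x : symmetric h -> component h S -> forest_edge h S p q ->
  is_gcycle h s -> x \in s -> ~~ same_pair x (next s x) p q.
Proof.
move=> symh cS [/and3P[pS qS _] nc] gs xs.
have nxs : next s x \in s by rewrite mem_next.
apply/negP => sp.
have [ps qs] : p \in s /\ q \in s.
  by case/orP: sp => /andP[/eqP <- /eqP <-].
have [_ ic] := cycle_in_comp symh cS gs ps pS.
by apply: nc; split; exists s.
Qed.

Lemma fe_swap h S x y : symmetric h -> forest_edge h S x y -> forest_edge h S y x.
Proof.
move=> symh [/and3P[xS yS hxy] nc]; split.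
  by rewrite /induced xS yS symh.
by case=> ??; apply: nc.
Qed.

End Generic.

Definition gz (T : finType) (g : rel T) (a b c d : T) : rel T :=
  fun u v => g u v && ~~ same_pair u v a b && ~~ same_pair u v c d.

Section Main.
Variables (T : finType) (g : rel T) (a b c d : T) (U U' : {set T})
  (c0 c0' : seq T) (u0 w0 : T).
Hypotheses (pfg : pseudoforest g) (cU : component g U) (cU' : component g U')
  (UU' : U != U') (fab : forest_edge g U a b) (fcd : forest_edge g U' c d)
  (ic0 : is_gcycle (induced g U) c0)
  (uc0 : forall c', is_gcycle (induced g U) c' -> cycle_edges c' = cycle_edges c0)
  (ic0' : is_gcycle (induced g U') c0')
  (uc0' : forall c', is_gcycle (induced g U') c' -> cycle_edges c' = cycle_edges c0')
  (u0c : u0 \in c0) (w0c : w0 \in c0').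

Local Notation g0 := (gz g a b c d).

Lemma symg : symmetric g. Proof. by case: pfg => [[]]. Qed.
Lemma irrg : irreflexive g. Proof. by case: pfg => [[]]. Qed.
Lemma simg : simple_graph g. Proof. by case: pfg. Qed.

Lemma aU : a \in U. Proof. by case: fab => /and3P[]. Qed.
Lemma bU : b \in U. Proof. by case: fab => /and3P[]. Qed.
Lemma gab : g a b. Proof. by case: fab => /and3P[]. Qed.
Lemma cU'' : c \in U'. Proof. by case: fcd => /and3P[]. Qed.
Lemma dU' : d \in U'. Proof. by case: fcd => /and3P[]. Qed.
Lemma gcd : g c d. Proof. by case: fcd => /and3P[]. Qed.

Lemma disj x : x \in U -> x \in U' -> False.
Proof.
move=> xU xU'; move/eqP: UU'; apply; apply/setP => y.
by rewrite (comp_mem y symg cU xU) (comp_mem y symg cU' xU').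
Qed.

Lemma nU' x : x \in U -> (x \in U') = false.
Proof. by move=> xU; apply/negP => /(disj xU). Qed.

Lemma nU x : x \in U' -> (x \in U) = false.
Proof. by move=> xU'; apply/negP => /disj; apply. Qed.

Lemma sym0 : symmetric g0.
Proof. by move=> u v; rewrite /gz symg same_pairS (same_pairS u v c d). Qed.

Lemma sub0 : subrel g0 g.
Proof. by move=> u v /andP[/andP[]]. Qed.

Lemma side x y S : component g S -> x \in S -> connect g0 x y -> y \in S.
Proof.
move=> cS xS cxy; rewrite (comp_mem y symg cS xS).
by apply: (connect_sub _ cxy) => u v /sub0 /connect1.
Qed.

Lemma brab : connect g0 a b = false.
Proof.
apply/negbTE/(bridge simg cU fab sub0).
by move=> u v /andP[/andP[_ ->]].
Qed.

Lemma brcd : connect g0 c d = false.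
Proof.
apply/negbTE/(bridge simg cU' fcd sub0).
by move=> u v /andP[_ ->].
Qed.

Lemma connS x y : connect g0 x y = connect g0 y x.
Proof. by rewrite (sym_connect_sym sym0). Qed.

Lemma nsp_U u v p q : u \in U -> p \in U' -> q \in U' -> ~~ same_pair u v p q.
Proof.
move=> uU pU qU; apply/negP => /orP[] /andP[/eqP e _]; move: uU; rewrite e => uU;
  [exact: (disj uU pU) | exact: (disj uU qU)].
Qed.

Lemma nsp_U' u v p q : u \in U' -> p \in U -> q \in U -> ~~ same_pair u v p q.
Proof.
move=> uU pU qU; apply/negP => /orP[] /andP[/eqP e _]; move: uU; rewrite e => uU;
  [exact: (disj pU uU) | exact: (disj qU uU)].
Qed.

Lemma coverU x : x \in U -> connect g0 a x || connect g0 b x.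
Proof.
move=> xU; apply: (@cover_split T g U a b g0 symg cU aU _ x xU); move=> u v huv uS.
rewrite /gz huv /=; case: (same_pair u v a b); rewrite ?orbT //.
by rewrite (nsp_U v uS cU'' dU').
Qed.

Lemma coverU' x : x \in U' -> connect g0 c x || connect g0 d x.
Proof.
move=> xU; apply: (@cover_split T g U' c d g0 symg cU' cU'' _ x xU); move=> u v huv uS.
rewrite /gz huv /= (nsp_U' v uS aU bU) /=.
by case: (same_pair u v c d); rewrite ?orbT.
Qed.

Lemma neqUU' x y : x \in U -> y \in U' -> x != y.
Proof. by move=> xU yU; apply/eqP => e; move: (disj xU); rewrite e; apply. Qed.

Lemma ngUU' x y : x \in U -> y \in U' -> ~~ g x y.
Proof.
move=> xU yU; apply/negP => gxy; apply: (disj _ yU).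
by rewrite (comp_mem y symg cU xU) connect1.
Qed.

Lemma inter : interchangeable g a b c d.
Proof.
by rewrite /interchangeable gab gcd !neqUU' ?ngUU' // ?aU ?bU ?cU'' ?dU'.
Qed.

Local Notation tau := (two_switch g a b c d).

Lemma tauE u v : tau u v = g0 u v || same_pair u v a c || same_pair u v b d.
Proof. by rewrite /two_switch inter. Qed.

Lemma simtau : simple_graph tau.
Proof.
split.
  by move=> u v; rewrite !tauE sym0 same_pairS (same_pairS u v b d).
move=> u; rewrite tauE /gz irrg /=; apply/negbTE/negP.
case/orP => /orP[] /andP[/eqP e1 /eqP e2].
- by move: (neqUU' aU cU''); rewrite -e1 -e2 eqxx.
- by move: (neqUU' aU cU''); rewrite -e1 -e2 eqxx.
- by move: (neqUU' bU dU'); rewrite -e1 -e2 eqxx.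
- by move: (neqUU' bU dU'); rewrite -e1 -e2 eqxx.
Qed.

Lemma sub0tau : subrel g0 tau.
Proof. by move=> u v h; rewrite tauE h. Qed.

Lemma sideU p x : p \in U -> connect g0 p x -> x \in U.
Proof. exact: side cU. Qed.

Lemma sideU' p x : p \in U' -> connect g0 p x -> x \in U'.
Proof. exact: side cU'. Qed.

Lemma nconn x y : x \in U -> y \in U' -> connect g0 x y = false.
Proof. by move=> xU yU; apply/negP => /(sideU xU) yU2; apply: (disj yU2 yU). Qed.

Lemma nconn' x y : x \in U' -> y \in U -> connect g0 x y = false.
Proof. by move=> xU yU; apply/negP => /(sideU' xU) yU'; apply: (disj yU yU'). Qed.

Lemma symc0 : connect_sym g0. Proof. exact: sym_connect_sym sym0. Qed.

Lemma cyc_tau s : is_gcycle tau s <-> is_gcycle g s.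
Proof.
split=> gs; case: (gs) => cs us ss; split=> //; apply: (cycle_from_next us) => x xs.
  have := next_cycle cs xs; rewrite tauE => /orP[/orP[/sub0 //|spac]|spbd]; exfalso.
    have := @cut_cycle2 T tau (fun v => connect g0 a v) s x a c gs xs spac.
    rewrite connect0 nconn ?aU ?cU'' // => H; suff: true = false by []; apply: H.
    move=> u v; rewrite tauE => /orP[/orP[e|sp]|sp] nsp.
    - exact: (same_connect_r symc0 (connect1 e) a).
    - by rewrite sp in nsp.
    - by case/orP: sp => /andP[/eqP-> /eqP->]; rewrite brab nconn ?aU ?dU'.
  have := @cut_cycle2 T tau (fun v => connect g0 b v) s x b d gs xs spbd.
  rewrite connect0 nconn ?bU ?dU' // => H; suff: true = false by []; apply: H.
  move=> u v; rewrite tauE => /orP[/orP[e|sp]|sp] nsp.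
  - exact: (same_connect_r symc0 (connect1 e) b).
  - by case/orP: sp => /andP[/eqP-> /eqP->]; rewrite (connS b a) brab nconn ?bU ?cU''.
  - by rewrite sp in nsp.
by rewrite tauE /gz (next_cycle cs xs) (no_sp symg cU fab gs xs) (no_sp symg cU' fcd gs xs).
Qed.

Definition AC := [set v | connect g0 a v || connect g0 c v].
Definition BD := [set v | connect g0 b v || connect g0 d v].
Definition L x := if connect g0 a x || connect g0 c x then AC
  else if connect g0 b x || connect g0 d x then BD else [set y | connect g x y].

Lemma L_tau u v : tau u v -> L u = L v.
Proof.
rewrite tauE => /orP[/orP[e|sp]|sp].
- have eS : [set y | connect g u y] = [set y | connect g v y].
    by apply/setP => y; rewrite !inE (same_connect (sym_connect_sym symg) (connect1 (sub0 e))).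
  rewrite /L eS (same_connect_r symc0 (connect1 e) a) (same_connect_r symc0 (connect1 e) b).
  by rewrite (same_connect_r symc0 (connect1 e) c) (same_connect_r symc0 (connect1 e) d).
- by case/orP: sp => /andP[/eqP-> /eqP->]; rewrite /L !connect0 ?orbT.
- have Lb : L b = BD.
    by rewrite /L brab (nconn' cU'' bU) connect0.
  have Ld : L d = BD.
    by rewrite /L brcd (nconn aU dU') connect0 orbT.
  by case/orP: sp => /andP[/eqP-> /eqP->]; rewrite Lb Ld.
Qed.

Lemma L_conn u v : connect tau u v -> L u = L v.
Proof. exact: conn_pres L_tau u v. Qed.

Lemma mem_L x : x \in L x.
Proof.
rewrite /L; case: ifP => [h|_]; first by rewrite inE h.
by case: ifP => [h|_]; rewrite inE ?h ?connect0.
Qed.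

Lemma mono0 x : x \in c0 -> connect g0 a x = connect g0 a u0.
Proof.
have [gc0 sc0] := induced_cycle ic0.
have cyc : cycle g0 c0.
  case: (gc0) => cs us ss; apply: (cycle_from_next us) => y ys.
  by rewrite /gz (next_cycle cs ys) (no_sp symg cU fab gc0 ys) (nsp_U _ (sc0 y ys) cU'' dU').
move=> xs; have := cycle_conn cyc u0c xs.
by move/(same_connect_r symc0)/(_ a)->.
Qed.

Lemma mono0' x : x \in c0' -> connect g0 c x = connect g0 c w0.
Proof.
have [gc0 sc0] := induced_cycle ic0'.
have cyc : cycle g0 c0'.
  case: (gc0) => cs us ss; apply: (cycle_from_next us) => y ys.
  by rewrite /gz (next_cycle cs ys) (no_sp symg cU' fcd gc0 ys) (nsp_U' _ (sc0 y ys) aU bU).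
move=> xs; have := cycle_conn cyc w0c xs.
by move/(same_connect_r symc0)/(_ c)->.
Qed.

Lemma K1 s x : is_gcycle g s -> x \in s -> x \in U ->
  L x = if connect g0 a u0 then AC else BD.
Proof.
move=> gs xs xU; have [_ ics] := cycle_in_comp symg cU gs xs xU.
have m := mono0 (edges_mem (uc0 ics) xs).
rewrite /L m (nconn' cU'' xU) orbF.
case Ha: (connect g0 a u0) => //.
by have := coverU xU; rewrite m Ha /= => ->.
Qed.

Lemma K2 s x : is_gcycle g s -> x \in s -> x \in U' ->
  L x = if connect g0 c w0 then AC else BD.
Proof.
move=> gs xs xU; have [_ ics] := cycle_in_comp symg cU' gs xs xU.
have m := mono0' (edges_mem (uc0' ics) xs).
rewrite /L m (nconn aU xU) /=.
case Hc: (connect g0 c w0) => //.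
rewrite (nconn bU xU) /=.
by have := coverU' xU; rewrite m Hc /= => ->.
Qed.

Lemma K3 x : x \notin U -> x \notin U' -> L x = [set y | connect g x y].
Proof.
move=> xU xU'; rewrite /L.
have F : forall p, p \in U -> connect g0 p x = false.
  by move=> p pU; apply/negP => /(sideU pU) xU2; rewrite xU2 in xU.
have F' : forall p, p \in U' -> connect g0 p x = false.
  by move=> p pU; apply/negP => /(sideU' pU) xU2; rewrite xU2 in xU'.
by rewrite F ?aU // F' ?cU'' // F ?bU // F' ?dU'.
Qed.

Lemma AC_BD : AC != BD.
Proof.
apply/eqP => e; have : a \in AC by rewrite inE connect0.
by rewrite e inE connS brab (nconn' dU' aU).
Qed.

Lemma LUU x : x \in AC \/ x \in BD -> x \in U \/ x \in U'.
Proof.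
rewrite !inE => -[] /orP[] h.
- by left; apply: sideU h; apply: aU.
- by right; apply: sideU' h; apply: cU''.
- by left; apply: sideU h; apply: bU.
- by right; apply: sideU' h; apply: dU'.
Qed.

Lemma main_conv : connect g0 a u0 != connect g0 c w0 -> pseudoforest tau.
Proof.
move=> H; apply: (pf_conv simtau) => s1 s2 u v i1 i2 us vs cuv.
have g1 := (cyc_tau s1).1 i1; have g2 := (cyc_tau s2).1 i2.
apply: (pf_dir pfg g1 g2 us vs).
have Luv := L_conn cuv.
have symcg := sym_connect_sym symg.
have out1 : u \notin U -> u \notin U' -> connect g u v.
  by move=> h1 h2; have := mem_L v; rewrite -Luv K3 // inE.
have out2 : v \notin U -> v \notin U' -> connect g u v.
  by move=> h1 h2; have := mem_L u; rewrite Luv K3 // inE symcg.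
have mix : forall s s' x y, is_gcycle g s -> is_gcycle g s' -> x \in s -> y \in s' ->
    x \in U -> y \in U' -> L x = L y -> False.
  move=> s s' x y gs gs' xs ys xU yU; rewrite (K1 gs xs xU) (K2 gs' ys yU).
  move: H; case: (connect g0 a u0); case: (connect g0 c w0) => //= _ e.
    by move: AC_BD; rewrite e eqxx.
  by move: AC_BD; rewrite e eqxx.
case: (boolP (u \in U)) => uU; case: (boolP (v \in U)) => vU.
- by rewrite -(comp_mem v symg cU uU).
- case: (boolP (v \in U')) => vU'; last by apply: out2.
  by case: (mix _ _ u v g1 g2 us vs uU vU' Luv).
- case: (boolP (u \in U')) => uU'; last by apply: out1.
  by case: (mix _ _ v u g2 g1 vs us vU uU' (esym Luv)).
case: (boolP (u \in U')) => uU'; last by apply: out1.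
case: (boolP (v \in U')) => vU'; last by apply: out2.
by rewrite -(comp_mem v symg cU' uU').
Qed.

Lemma main_dir : pseudoforest tau -> connect g0 a u0 != connect g0 c w0.
Proof.
move=> pft; apply/negP => /eqP Hag.
have [gc0 sc0] := induced_cycle ic0; have [gc0' sc0'] := induced_cycle ic0'.
have t0 := (cyc_tau c0).2 gc0; have t0' := (cyc_tau c0').2 gc0'.
have symt := sym_connect_sym simtau.1.
have sub : forall x y, connect g0 x y -> connect tau x y.
  by move=> x y; apply: connect_sub => u v e; apply: connect1; apply: sub0tau.
have cw : connect tau u0 w0.
  case Ha: (connect g0 a u0).
    have h1 : connect tau u0 a by rewrite symt; apply: sub.
    have h2 : connect tau c w0 by apply: sub; rewrite -Hag.
    have h3 : tau a c by rewrite tauE same_pair_refl orbT.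
    exact: connect_trans (connect_trans h1 (connect1 h3)) h2.
  have h1 : connect tau u0 b.
    by rewrite symt; apply: sub; have := coverU (sc0 u0 u0c); rewrite Ha.
  have h2 : connect tau d w0.
    by apply: sub; have := coverU' (sc0' w0 w0c); rewrite -Hag Ha.
  have h3 : tau b d by rewrite tauE same_pair_refl orbT.
  exact: connect_trans (connect_trans h1 (connect1 h3)) h2.
have E := pf_dir pft t0 t0' u0c w0c cw.
exact: disj (sc0 u0 u0c) (sc0' u0 (edges_mem E u0c)).
Qed.

Lemma main : pseudoforest tau <-> connect g0 a u0 != connect g0 c w0.
Proof. by split; [apply: main_dir | apply: main_conv]. Qed.

Lemma gam_compl : connect g0 d w0 = ~~ connect g0 c w0.
Proof.
have [_ sc0'] := induced_cycle ic0'.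
have := coverU' (sc0' w0 w0c).
case Hc: (connect g0 c w0) => //= _.
apply/negP => Hd; move: brcd; rewrite (connect_trans Hc _) //.
by rewrite connS.
Qed.

End Main.

Theorem lemma4p6 (T : finType) (g : rel T) (a b c d : T) (U U' : {set T}) :
  pseudoforest g ->
  component g U -> component g U' ->
  unicyclic_on g U -> unicyclic_on g U' ->
  U != U' ->
  forest_edge g U a b -> forest_edge g U' c d ->
  (p_switch g a b c d <-> ~ p_switch g a b d c).
Proof.
move=> pfg cU cU' [_ [c0 [ic0 uc0]]] [_ [c0' [ic0' uc0']]] UU' fab fcd.
have symg : symmetric g by case: pfg => [[]].
have fdc := fe_swap symg fcd.
have [u0 u0c] := gcycle_head ic0; have [w0 w0c] := gcycle_head ic0'.
have M1 := main pfg cU cU' UU' fab fcd ic0 uc0 ic0' uc0' u0c w0c.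
have M2 := main pfg cU cU' UU' fab fdc ic0 uc0 ic0' uc0' u0c w0c.
have I1 := inter pfg cU cU' UU' fab fcd.
have I2 := inter pfg cU cU' UU' fab fdc.
have E : connect (gz g a b d c) d w0 = ~~ connect (gz g a b c d) c w0.
  rewrite -(gam_compl pfg cU cU' UU' fab fcd ic0' w0c).
  by apply: eq_connect => u v; rewrite /gz (same_pairC u v d c).
have E2 : connect (gz g a b d c) a u0 = connect (gz g a b c d) a u0.
  by apply: eq_connect => u v; rewrite /gz (same_pairC u v d c).
rewrite /p_switch M1 M2 E E2.
split.
  by move=> [_ h1] [_ h2]; move: h1 h2; case: (connect _ a u0); case: (connect _ c w0).
move=> H; split=> //; apply/negP => /eqP e; apply: H; split=> //.
by rewrite e; case: (connect _ c w0).
Qed.
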